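(* Let $m$ be a positive integer, $\gamma=(f,g,h)\in C^m(\mathbb{R},\mathbb{R}^3)$ and $K\subseteq\mathbb{R}$ compact. Suppose $\alpha$ is a modulus of continuity such that, for all $x,y$ in an interval containing $K$ and for $\phi\in\{f,g\}$, $$|\phi^{(m)}(x)-\phi^{(m)}(y)|\le\alpha(|x-y|),\quad |\phi(y)-T^m_x\phi(y)|\le\alpha(|x-y|)|x-y|^m,\quad |\phi'(y)-(T^m_x\phi)'(y)|\le\alpha(|x-y|)|x-y|^{m-1}.$$ Then there is a constant $C>0$ depending only on $\gamma$ and $K$ such that for all $a,b\in K$, $$|A(\gamma;b,a)|\le C\big(|A(\gamma;a,b)|+\alpha(|b-a|)|b-a|^m\big).$$
   Context: $C^m(\mathbb{R},\mathbb{R}^3)$: curves whose components are $m$-times continuously differentiable with bounded $m$th derivative. A modulus of continuity is a continuous, increasing, concave $\alpha:[0,\infty)\to[0,\infty)$ with $\alpha(0)=0$. $T^m_x\phi(y)=\sum_{k=0}^m\frac{\phi^{(k)}(x)}{k!}(y-x)^k$, written $T_x\phi$. For $a,b\in\mathbb{R}$ (in either order, with oriented integrals): $A(\gamma;a,b)= h(b)-h(a)-2\int_a^b\big((T_af)'T_ag-(T_ag)'T_af\big) + 2f(a)(g(b)-T_ag(b)) - 2g(a)(f(b)-T_af(b))$. *)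

(* Defs.v *)
From Stdlib Require Import Reals Lra.
From Stdlib Require Export Rtopology.
From Coquelicot Require Export Coquelicot.
Open Scope R_scope.

Definition Cm (m : nat) (phi : R -> R) : Prop :=
  (forall k x, (k <= m)%nat -> ex_derive_n phi k x) /\
  (forall k x, (k <= m)%nat -> continuous (Derive_n phi k) x) /\
  (exists M, forall x, Rabs (Derive_n phi m x) <= M).

Definition modulus_of_continuity (alpha : R -> R) : Prop :=
  alpha 0 = 0 /\
  (forall t, 0 <= t -> 0 <= alpha t) /\
  (forall t, 0 <= t -> continuous alpha t) /\
  (forall s t, 0 <= s -> s <= t -> alpha s <= alpha t) /\
  (forall s t l, 0 <= s -> 0 <= t -> 0 <= l <= 1 ->
     l * alpha s + (1 - l) * alpha t <= alpha (l * s + (1 - l) * t)).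

Definition Taylor (m : nat) (phi : R -> R) (x y : R) : R :=
  sum_n (fun k => Derive_n phi k x / INR (Factorial.fact k) * (y - x) ^ k) m.

Definition Aarea (m : nat) (f g h : R -> R) (a b : R) : R :=
  h b - h a
  - 2 * RInt (fun t => Derive (Taylor m f a) t * Taylor m g a t
                       - Derive (Taylor m g a) t * Taylor m f a t) a b
  + 2 * f a * (g b - Taylor m g a b)
  - 2 * g a * (f b - Taylor m f a b).

Definition is_interval (I : R -> Prop) : Prop :=
  forall x y z, I x -> I y -> x <= z <= y -> I z.

Definition taylor_estimates (m : nat) (alpha : R -> R) (I : R -> Prop)
  (phi : R -> R) : Prop :=
  forall x y, I x -> I y ->
    Rabs (Derive_n phi m x - Derive_n phi m y) <= alpha (Rabs (x - y)) /\
    Rabs (phi y - Taylor m phi x y) <= alpha (Rabs (x - y)) * Rabs (x - y) ^ m /\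
    Rabs (Derive phi y - Derive (Taylor m phi x) y)
      <= alpha (Rabs (x - y)) * Rabs (x - y) ^ (m - 1).

(* Main.v *)
Require Import Defs.
From Stdlib Require Import Reals Lra Lia.
From Coquelicot Require Import Coquelicot.
Open Scope R_scope.

Lemma sum_ex_derive (u : nat -> R -> R) n t :
  (forall k t, ex_derive (u k) t) -> ex_derive (fun t => sum_n (fun k => u k t) n) t.
Proof.
  intros H. induction n.
  - apply ex_derive_ext with (u 0%nat). intros; now rewrite sum_O. apply H.
  - apply ex_derive_ext with (fun t => plus (sum_n (fun k => u k t) n) (u (S n) t)).
    intros; now rewrite sum_Sn. apply (@ex_derive_plus R_AbsRing R_NormedModule (fun t => sum_n (fun k => u k t) n) (u (S n))); auto.
Qed.

Lemma poly_deriv (c : nat -> R) (a : R) n t :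
  is_derive (fun t => sum_n (fun k => c k * (t-a)^k) n) t
            (sum_n (fun k => c k * (INR k * (t-a)^(pred k))) n).
Proof.
  induction n.
  - rewrite sum_O. apply is_derive_ext with (fun t => c 0%nat * (t-a)^0).
    intros; now rewrite sum_O. auto_derive; auto. simpl; ring.
  - rewrite sum_Sn. apply is_derive_ext with (fun t => plus (sum_n (fun k => c k * (t-a)^k) n) (c (S n) * (t-a)^(S n))).
    intros; now rewrite sum_Sn. apply (@is_derive_plus R_AbsRing R_NormedModule (fun t => sum_n (fun k => c k * (t-a)^k) n) (fun t => c (S n) * (t-a)^(S n))); auto.
    auto_derive; auto. simpl. unfold Rminus; ring.
Qed.

Lemma Taylor_cont (m : nat) (phi : R -> R) x t : continuous (Taylor m phi x) t.
Proof.
  apply (@ex_derive_continuous R_AbsRing R_NormedModule). unfold Taylor.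
  apply (sum_ex_derive (fun k t => Derive_n phi k x / INR (Factorial.fact k) * (t - x) ^ k)).
  intros; auto_derive; auto.
Qed.

Lemma DTaylor_cont (m : nat) (phi : R -> R) x t : continuous (fun t => Derive (Taylor m phi x) t) t.
Proof.
  apply continuous_ext with (fun t => sum_n (fun k => (Derive_n phi k x / INR (Factorial.fact k)) * (INR k * (t-x)^(pred k))) m).
  intros; symmetry; apply is_derive_unique; unfold Taylor; apply (poly_deriv (fun k => Derive_n phi k x / INR (Factorial.fact k))).
  apply (@ex_derive_continuous R_AbsRing R_NormedModule).
  apply (sum_ex_derive (fun k t => (Derive_n phi k x / INR (Factorial.fact k)) * (INR k * (t-x)^(pred k)))).
  intros; auto_derive; auto.
Qed.

Lemma RInt_abs_bound (h : R -> R) x y M : ex_RInt h x y ->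
  (forall t, Rmin x y <= t <= Rmax x y -> Rabs (h t) <= M) ->
  Rabs (RInt h x y) <= Rabs (y - x) * M.
Proof.
  intros Hi Hb. destruct (Rle_dec x y) as [Hxy|Hxy].
  - rewrite (Rabs_right (y-x)) by lra. apply abs_RInt_le_const; auto.
    intros t Ht; apply Hb. rewrite Rmin_left, Rmax_right; lra.
  - rewrite <- opp_RInt_swap by (apply ex_RInt_swap; auto). unfold opp; simpl. rewrite Rabs_Ropp.
    rewrite (Rabs_left (y-x)) by lra. replace (-(y-x)) with (x-y) by ring.
    apply abs_RInt_le_const. lra. apply ex_RInt_swap; auto.
    intros t Ht; apply Hb. rewrite Rmin_right, Rmax_left; lra.
Qed.

Lemma cont_bound (phi : R -> R) lo hi : (forall x, continuous phi x) ->
  exists B, 0 <= B /\ forall x, lo <= x <= hi -> Rabs (phi x) <= B.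
Proof.
  intros Hc. destruct (Rle_dec lo hi) as [H|H].
  - destruct (continuity_ab_maj (fun x => Rabs (phi x)) lo hi H) as [X [HX1 HX2]].
    intros c _. apply continuity_pt_filterlim.
    apply (continuous_comp phi Rabs). apply Hc. apply continuous_Rabs.
    exists (Rabs (phi X)); split. apply Rabs_pos. intros; apply HX1; auto.
  - exists 0; split. lra. intros; lra.
Qed.

Lemma combine u1 u2 u3 u4 Q P Df Dg E BT B D :
  Rabs u1 <= E -> Rabs u2 <= E*D -> Rabs u3 <= E -> Rabs u4 <= E*D ->
  Rabs Q <= BT -> Rabs P <= BT -> Rabs Df <= B -> Rabs Dg <= B ->
  Rabs (-u1*Q - Df*u2 + u3*P + Dg*u4) <= (2*BT+2*B*D)*E.
Proof.
  intros H1 H2 H3 H4 H5 H6 H7 H8.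
  assert (A1: Rabs (u1*Q) <= E*BT) by (rewrite Rabs_mult; apply Rmult_le_compat; auto using Rabs_pos).
  assert (A2: Rabs (Df*u2) <= B*(E*D)) by (rewrite Rabs_mult; apply Rmult_le_compat; auto using Rabs_pos).
  assert (A3: Rabs (u3*P) <= E*BT) by (rewrite Rabs_mult; apply Rmult_le_compat; auto using Rabs_pos).
  assert (A4: Rabs (Dg*u4) <= B*(E*D)) by (rewrite Rabs_mult; apply Rmult_le_compat; auto using Rabs_pos).
  replace (-u1*Q - Df*u2 + u3*P + Dg*u4) with ((-(u1*Q)) + (-(Df*u2)) + (u3*P) + (Dg*u4)) by ring.
  eapply Rle_trans. apply Rabs_triang.
  eapply Rle_trans. apply Rplus_le_compat_r. apply Rabs_triang.
  eapply Rle_trans. apply Rplus_le_compat_r. apply Rplus_le_compat_r. apply Rabs_triang.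
  rewrite !Rabs_Ropp. lra.
Qed.

Lemma final_comb A1 A2 s1 s2 fa ga fb gb e1 e2 e3 e4 L B W :
  A2 = -A1 - 2*s1 - 2*s2 + 2*(fa*e1) - 2*(ga*e2) + 2*(fb*e3) - 2*(gb*e4) ->
  Rabs s1 <= L*W -> Rabs s2 <= L*W ->
  Rabs fa <= B -> Rabs ga <= B -> Rabs fb <= B -> Rabs gb <= B ->
  Rabs e1 <= W -> Rabs e2 <= W -> Rabs e3 <= W -> Rabs e4 <= W ->
  0 <= L -> 0 <= B -> 0 <= W ->
  Rabs A2 <= (1 + 4*L + 8*B) * (Rabs A1 + W).
Proof.
  intros E H1 H2 H3 H4 H5 H6 H7 H8 H9 H10 L0 B0 W0. subst A2.
  assert (P1: Rabs (fa*e1) <= B*W) by (rewrite Rabs_mult; apply Rmult_le_compat; auto using Rabs_pos).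
  assert (P2: Rabs (ga*e2) <= B*W) by (rewrite Rabs_mult; apply Rmult_le_compat; auto using Rabs_pos).
  assert (P3: Rabs (fb*e3) <= B*W) by (rewrite Rabs_mult; apply Rmult_le_compat; auto using Rabs_pos).
  assert (P4: Rabs (gb*e4) <= B*W) by (rewrite Rabs_mult; apply Rmult_le_compat; auto using Rabs_pos).
  revert P1 P2 P3 P4 H1 H2.
  generalize (fa*e1) (ga*e2) (fb*e3) (gb*e4). intros p1 p2 p3 p4 P1 P2 P3 P4 H1 H2.
  assert (0 <= Rabs A1) by apply Rabs_pos.
  assert (0 <= L*W) by nra. assert (0 <= B*W) by nra.
  apply Rabs_le_between in P1; apply Rabs_le_between in P2; apply Rabs_le_between in P3;
  apply Rabs_le_between in P4; apply Rabs_le_between in H1; apply Rabs_le_between in H2.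
  assert (Hc: Rabs A1 + 4*(L*W) + 8*(B*W) <= (1+4*L+8*B)*(Rabs A1 + W)) by nra.
  set (X := (1+4*L+8*B)*(Rabs A1 + W)) in *. set (LW := L*W) in *. set (BW := B*W) in *.
  apply Rabs_le_between. pose proof (Rabs_le_between A1 (Rabs A1)) as [HA _].
  specialize (HA (Rle_refl _)). lra.
Qed.

Lemma derivs_bound m (phi : R -> R) lo hi :
  (forall k x, (k <= m)%nat -> continuous (Derive_n phi k) x) ->
  exists B, 0 <= B /\ forall k x, (k <= m)%nat -> lo <= x <= hi -> Rabs (Derive_n phi k x) <= B.
Proof.
  intros Hc.
  assert (forall n, (n <= m)%nat -> exists B, 0 <= B /\ forall k x, (k <= n)%nat -> lo <= x <= hi -> Rabs (Derive_n phi k x) <= B).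
  { induction n; intros Hn.
    - destruct (cont_bound (Derive_n phi 0) lo hi) as [B [B0 HB]].
      intros; apply Hc; lia.
      exists B; split; auto. intros k x Hk Hx. replace k with 0%nat by lia. auto.
    - destruct IHn as [B1 [B10 HB1]]. lia.
      destruct (cont_bound (Derive_n phi (S n)) lo hi) as [B [B0 HB]].
      intros; apply Hc; lia.
      exists (Rmax B1 B); split. eapply Rle_trans; [apply B0|apply Rmax_r].
      intros k x Hk Hx. destruct (Nat.eq_dec k (S n)).
      + subst. eapply Rle_trans; [apply HB; auto|apply Rmax_r].
      + eapply Rle_trans; [apply HB1; auto; lia|apply Rmax_l]. }
  apply H; lia.
Qed.

Lemma Taylor_bound m (phi : R -> R) lo hi B :
  0 <= B -> (forall k x, (k <= m)%nat -> lo <= x <= hi -> Rabs (Derive_n phi k x) <= B) ->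
  forall x t, lo <= x <= hi -> lo <= t <= hi ->
  Rabs (Taylor m phi x t) <= INR (S m) * B * (1 + Rabs (hi - lo))^m.
Proof.
  intros B0 HB x t Hx Ht. unfold Taylor.
  set (D1 := 1 + Rabs (hi - lo)).
  assert (D1ge: 1 <= D1) by (unfold D1; pose proof (Rabs_pos (hi-lo)); lra).
  assert (term: forall k, (k <= m)%nat ->
    Rabs (Derive_n phi k x / INR (Factorial.fact k) * (t - x) ^ k) <= B * D1^m).
  { intros k Hk. rewrite Rabs_mult. apply Rmult_le_compat; try apply Rabs_pos.
    - unfold Rdiv. rewrite Rabs_mult.
      assert (F1: 1 <= INR (Factorial.fact k)).
      { replace 1 with (INR 1) by reflexivity. apply le_INR. pose proof (Factorial.lt_O_fact k). lia. }
      rewrite Rabs_inv. rewrite (Rabs_right (INR _)) by lra.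
      replace B with (B * 1) by ring. apply Rmult_le_compat; try apply Rabs_pos.
      left; apply Rinv_0_lt_compat; lra. apply HB; auto.
      rewrite <- Rinv_1. apply Rinv_le_contravar; lra.
    - rewrite <- RPow_abs. eapply Rle_trans. apply pow_incr. split. apply Rabs_pos.
      instantiate (1 := D1). unfold D1. unfold Rabs; repeat destruct Rcase_abs; lra.
      apply Rle_pow; auto. }
  assert (forall n, (n <= m)%nat -> Rabs (sum_n (fun k => Derive_n phi k x / INR (Factorial.fact k) * (t - x) ^ k) n) <= INR (S n) * B * D1^m).
  { induction n; intros Hn.
    - rewrite sum_O. simpl INR. rewrite Rmult_1_l. apply term; lia.
    - rewrite sum_Sn. eapply Rle_trans. apply Rabs_triang.
      rewrite S_INR. specialize (IHn ltac:(lia)). specialize (term (S n) Hn). lra. }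
  apply H; lia.
Qed.

Lemma pow_pred_m (m : nat) z : (1 <= m)%nat -> z ^ m = z ^ (m - 1) * z.
Proof. intros. replace m with (S (m-1)) at 1 by lia. simpl. ring. Qed.

Lemma pointwise m (f g alpha : R -> R) (I : R -> Prop) lo hi B BT x y t :
  (1 <= m)%nat -> modulus_of_continuity alpha -> is_interval I ->
  taylor_estimates m alpha I f -> taylor_estimates m alpha I g ->
  I x -> I y -> lo <= x <= hi -> lo <= y <= hi -> Rmin x y <= t <= Rmax x y ->
  (forall u, lo <= u <= hi -> Rabs (Derive f u) <= B /\ Rabs (Derive g u) <= B) ->
  (forall u, lo <= u <= hi -> Rabs (Taylor m f x u) <= BT /\ Rabs (Taylor m g x u) <= BT) ->
  Rabs ((Derive (Taylor m f x) t * Taylor m g x t - Derive (Taylor m g x) t * Taylor m f x t)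
        - (Derive f t * g t - Derive g t * f t))
   <= (2*BT + 2*B*Rabs (hi - lo)) * (alpha (Rabs (y - x)) * Rabs (y - x) ^ (m - 1)).
Proof.
  intros Hm Hal HI Hf Hg Ix Iy Hx Hy Ht HB HT.
  assert (It : I t /\ lo <= t <= hi /\ Rabs (x - t) <= Rabs (y - x)).
  { destruct (Rle_dec x y).
    - rewrite Rmin_left, Rmax_right in Ht by lra. split. apply (HI x y t); auto.
      split. lra. unfold Rabs; repeat destruct Rcase_abs; lra.
    - rewrite Rmin_right, Rmax_left in Ht by lra. split. apply (HI y x t); auto.
      split. lra. unfold Rabs; repeat destruct Rcase_abs; lra. }
  destruct It as [It [Htl Hsd]].
  assert (HdD : Rabs (y - x) <= Rabs (hi - lo)) by (unfold Rabs; repeat destruct Rcase_abs; lra).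
  destruct Hal as [a0 [apos [acont [amono aconc]]]].
  set (s := Rabs (x - t)) in *. set (d := Rabs (y - x)) in *.
  assert (s0 : 0 <= s) by apply Rabs_pos.
  assert (ha : alpha s <= alpha d) by (apply amono; auto).
  assert (hp : s ^ (m-1) <= d ^ (m-1)) by (apply pow_incr; auto).
  assert (as0 : 0 <= alpha s) by auto.
  assert (ps0 : 0 <= s ^ (m-1)) by (apply pow_le; auto).
  set (E := alpha d * d ^ (m-1)).
  assert (key1 : alpha s * s ^ (m-1) <= E) by (apply Rmult_le_compat; auto).
  assert (key2 : alpha s * s ^ m <= E * Rabs (hi - lo)).
  { rewrite (pow_pred_m m s Hm). rewrite <- Rmult_assoc. apply Rmult_le_compat; auto.
    apply Rmult_le_pos; auto. lra. }
  destruct (Hf x t Ix It) as [_ [f2 f3]]. destruct (Hg x t Ix It) as [_ [g2 g3]].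
  fold s in f2, f3, g2, g3.
  destruct (HB t Htl) as [Bf Bg]. destruct (HT t Htl) as [Tf Tg].
  replace ((Derive (Taylor m f x) t * Taylor m g x t - Derive (Taylor m g x) t * Taylor m f x t)
        - (Derive f t * g t - Derive g t * f t)) with
    (-(Derive f t - Derive (Taylor m f x) t) * Taylor m g x t - Derive f t * (g t - Taylor m g x t)
     + (Derive g t - Derive (Taylor m g x) t) * Taylor m f x t + Derive g t * (f t - Taylor m f x t)) by ring.
  apply combine; lra.
Qed.

Lemma integral_est m (f g alpha : R -> R) (I : R -> Prop) lo hi B BT x y :
  (1 <= m)%nat -> modulus_of_continuity alpha -> is_interval I ->
  taylor_estimates m alpha I f -> taylor_estimates m alpha I g ->
  I x -> I y -> lo <= x <= hi -> lo <= y <= hi ->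
  (forall u, continuous f u) -> (forall u, continuous g u) ->
  (forall u, continuous (Derive f) u) -> (forall u, continuous (Derive g) u) ->
  (forall u, lo <= u <= hi -> Rabs (Derive f u) <= B /\ Rabs (Derive g u) <= B) ->
  (forall u, lo <= u <= hi -> Rabs (Taylor m f x u) <= BT /\ Rabs (Taylor m g x u) <= BT) ->
  Rabs (RInt (fun t => Derive (Taylor m f x) t * Taylor m g x t - Derive (Taylor m g x) t * Taylor m f x t) x y
        - RInt (fun t => Derive f t * g t - Derive g t * f t) x y)
   <= (2*BT + 2*B*Rabs (hi - lo)) * (alpha (Rabs (y - x)) * Rabs (y - x) ^ m).
Proof.
  intros Hm Hal HI Hf Hg Ix Iy Hx Hy cf cg cdf cdg HB HT.
  assert (E1 : ex_RInt (fun t => Derive (Taylor m f x) t * Taylor m g x t - Derive (Taylor m g x) t * Taylor m f x t) x y).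
  { apply (@ex_RInt_continuous R_CompleteNormedModule). intros z _.
    apply (@continuous_minus R_UniformSpace R_AbsRing R_NormedModule (fun t => Derive (Taylor m f x) t * Taylor m g x t) (fun t => Derive (Taylor m g x) t * Taylor m f x t)).
    apply (@continuous_mult R_UniformSpace R_AbsRing (fun t => Derive (Taylor m f x) t) (Taylor m g x)); auto using DTaylor_cont, Taylor_cont.
    apply (@continuous_mult R_UniformSpace R_AbsRing (fun t => Derive (Taylor m g x) t) (Taylor m f x)); auto using DTaylor_cont, Taylor_cont. }
  assert (E2 : ex_RInt (fun t => Derive f t * g t - Derive g t * f t) x y).
  { apply (@ex_RInt_continuous R_CompleteNormedModule). intros z _.
    apply (@continuous_minus R_UniformSpace R_AbsRing R_NormedModule (fun t => Derive f t * g t) (fun t => Derive g t * f t)).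
    apply (@continuous_mult R_UniformSpace R_AbsRing (Derive f) g); auto.
    apply (@continuous_mult R_UniformSpace R_AbsRing (Derive g) f); auto. }
  set (F := fun t => Derive (Taylor m f x) t * Taylor m g x t - Derive (Taylor m g x) t * Taylor m f x t) in *.
  set (G := fun t => Derive f t * g t - Derive g t * f t) in *.
  assert (HR : RInt F x y - RInt G x y = RInt (fun t => F t - G t) x y).
  { symmetry. apply (@RInt_minus R_CompleteNormedModule F G x y E1 E2). }
  rewrite HR.
  replace ((2*BT + 2*B*Rabs (hi - lo)) * (alpha (Rabs (y - x)) * Rabs (y - x) ^ m)) with
    (Rabs (y - x) * ((2*BT + 2*B*Rabs (hi - lo)) * (alpha (Rabs (y - x)) * Rabs (y - x) ^ (m - 1)))).
  2:{ rewrite (pow_pred_m m _ Hm). ring. }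
  apply RInt_abs_bound. apply (@ex_RInt_minus R_NormedModule); auto.
  intros t Ht. unfold F, G. eapply pointwise; eauto.
Qed.

Theorem lemma3p4 (m : nat) (f g h : R -> R) (K : R -> Prop) :
  (1 <= m)%nat ->
  Cm m f -> Cm m g -> Cm m h ->
  compact K ->
  exists C : R, 0 < C /\
    forall alpha : R -> R,
      modulus_of_continuity alpha ->
      (exists I : R -> Prop, is_interval I /\ (forall x, K x -> I x) /\
         taylor_estimates m alpha I f /\ taylor_estimates m alpha I g) ->
      forall a b, K a -> K b ->
        Rabs (Aarea m f g h b a)
          <= C * (Rabs (Aarea m f g h a b) + alpha (Rabs (b - a)) * Rabs (b - a) ^ m).
Proof.
  intros Hm Cf Cg Ch HK.
  destruct (compact_P1 K HK) as [lo [hi Hlh]].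
  destruct Cf as [_ [cf _]]. destruct Cg as [_ [cg _]].
  destruct (derivs_bound m f lo hi cf) as [Bf [Bf0 HBf]].
  destruct (derivs_bound m g lo hi cg) as [Bg [Bg0 HBg]].
  set (B := Rmax Bf Bg).
  assert (B0 : 0 <= B) by (eapply Rle_trans; [apply Bf0|apply Rmax_l]).
  assert (HBf' : forall k x, (k <= m)%nat -> lo <= x <= hi -> Rabs (Derive_n f k x) <= B)
    by (intros; eapply Rle_trans; [apply HBf; auto|apply Rmax_l]).
  assert (HBg' : forall k x, (k <= m)%nat -> lo <= x <= hi -> Rabs (Derive_n g k x) <= B)
    by (intros; eapply Rle_trans; [apply HBg; auto|apply Rmax_r]).
  set (BT := INR (S m) * B * (1 + Rabs (hi - lo))^m).
  assert (BT0 : 0 <= BT).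
  { unfold BT. apply Rmult_le_pos. apply Rmult_le_pos; auto. apply pos_INR.
    apply pow_le. pose proof (Rabs_pos (hi - lo)); lra. }
  set (L := 2*BT + 2*B*Rabs (hi - lo)).
  assert (L0 : 0 <= L) by (unfold L; pose proof (Rabs_pos (hi - lo)); nra).
  exists (1 + 4*L + 8*B). split. lra.
  intros alpha Hal [I [HI [HKI [Hf Hg]]]] a b Ka Kb.
  assert (ccf : forall u, continuous f u) by (intro u; exact (cf 0%nat u ltac:(lia))).
  assert (ccg : forall u, continuous g u) by (intro u; exact (cg 0%nat u ltac:(lia))).
  assert (cdf : forall u, continuous (Derive f) u) by (intro u; exact (cf 1%nat u Hm)).
  assert (cdg : forall u, continuous (Derive g) u) by (intro u; exact (cg 1%nat u Hm)).
  assert (HB : forall u, lo <= u <= hi -> Rabs (Derive f u) <= B /\ Rabs (Derive g u) <= B).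
  { intros u Hu. split. exact (HBf' 1%nat u Hm Hu). exact (HBg' 1%nat u Hm Hu). }
  assert (HT : forall x, lo <= x <= hi -> forall u, lo <= u <= hi -> Rabs (Taylor m f x u) <= BT /\ Rabs (Taylor m g x u) <= BT).
  { intros x Hx u Hu. split; apply Taylor_bound; auto. }
  pose proof (Hlh a Ka) as Ha. pose proof (Hlh b Kb) as Hb.
  pose proof (integral_est m f g alpha I lo hi B BT a b Hm Hal HI Hf Hg (HKI a Ka) (HKI b Kb) Ha Hb ccf ccg cdf cdg HB (HT a Ha)) as E1.
  pose proof (integral_est m f g alpha I lo hi B BT b a Hm Hal HI Hf Hg (HKI b Kb) (HKI a Ka) Hb Ha ccf ccg cdf cdg HB (HT b Hb)) as E2.
  fold L in E1, E2. rewrite (Rabs_minus_sym a b) in E2.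
  set (G := fun t => Derive f t * g t - Derive g t * f t) in *.
  assert (EG : ex_RInt G a b).
  { apply (@ex_RInt_continuous R_CompleteNormedModule). intros z _.
    apply (@continuous_minus R_UniformSpace R_AbsRing R_NormedModule (fun t => Derive f t * g t) (fun t => Derive g t * f t)).
    apply (@continuous_mult R_UniformSpace R_AbsRing (Derive f) g); auto.
    apply (@continuous_mult R_UniformSpace R_AbsRing (Derive g) f); auto. }
  assert (HGb : RInt G b a = - RInt G a b).
  { rewrite <- (opp_RInt_swap G a b EG). reflexivity. }
  destruct (Hf a b (HKI a Ka) (HKI b Kb)) as [_ [ef1 _]].
  destruct (Hg a b (HKI a Ka) (HKI b Kb)) as [_ [eg1 _]].
  destruct (Hf b a (HKI b Kb) (HKI a Ka)) as [_ [ef2 _]].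
  destruct (Hg b a (HKI b Kb) (HKI a Ka)) as [_ [eg2 _]].
  rewrite (Rabs_minus_sym a b) in ef1, eg1.
  destruct Hal as [a0 [apos Hrest]].
  assert (W0 : 0 <= alpha (Rabs (b - a)) * Rabs (b - a) ^ m).
  { apply Rmult_le_pos. apply apos, Rabs_pos. apply pow_le, Rabs_pos. }
  eapply final_comb with
    (s1 := RInt (fun t => Derive (Taylor m f a) t * Taylor m g a t - Derive (Taylor m g a) t * Taylor m f a t) a b - RInt G a b)
    (s2 := RInt (fun t => Derive (Taylor m f b) t * Taylor m g b t - Derive (Taylor m g b) t * Taylor m f b t) b a - RInt G b a)
    (fa := f a) (ga := g a) (fb := f b) (gb := g b)
    (e1 := g b - Taylor m g a b) (e2 := f b - Taylor m f a b)
    (e3 := g a - Taylor m g b a) (e4 := f a - Taylor m f b a); eauto.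
  - unfold Aarea. rewrite HGb. ring.
  - exact (HBf' 0%nat a ltac:(lia) Ha).
  - exact (HBg' 0%nat a ltac:(lia) Ha).
  - exact (HBf' 0%nat b ltac:(lia) Hb).
  - exact (HBg' 0%nat b ltac:(lia) Hb).
Qed.
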